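(* Let $d_{\mathrm{in}},d_{\mathrm{out}}\ge1$, $\lambda\in\mathbb{R}^{d_{\mathrm{in}}}$, $\eta,\alpha,\tau\in\mathbb{R}$, for each $q\in\{0,\dots,d_{\mathrm{out}}-1\}$ a neighborhood set $\mathcal N(q)\subseteq\{0,\dots,d_{\mathrm{out}}-1\}$ and real weights $\omega_{qj}$, $j\in\mathcal N(q)$. Fix $B_{\mathrm{in}}>0$ and let $\mathcal B_{\mathrm{in}}=[-B_{\mathrm{in}},B_{\mathrm{in}}]^{d_{\mathrm{in}}}$. Let $$I_\phi=[-B_{\mathrm{in}}-|\eta|(d_{\mathrm{out}}-1),\,B_{\mathrm{in}}+|\eta|(d_{\mathrm{out}}-1)],\quad M_\phi=\|\phi\|_{L^\infty(I_\phi)},$$ $$B_\omega=\sup_q\sum_{j\in\mathcal N(q)}|\omega_{qj}|,\quad R_{\mathrm{mix}}=1+|\tau|B_\omega,\quad M_s=\|\lambda\|_1M_\phi+|\alpha|(d_{\mathrm{out}}-1),\quad I_\Phi=[-R_{\mathrm{mix}}M_s,\,R_{\mathrm{mix}}M_s].$$ Assume $\phi$ is $C^2$ on a neighborhood of $I_\phi$ and $\Phi$ is $C^2$ on a neighborhood of $I_\Phi$. For $\mathbf z\in\mathcal B_{\mathrm{in}}$ define $s_q(\mathbf z)=\sum_{i=1}^{d_{\mathrm{in}}}\lambda_i\phi(z_i+\eta q)+\alpha q$, $\tilde s_q=s_q+\tau\sum_{j\in\mathcal N(q)}\omega_{qj}s_j$, and $[T(\mathbf z)]_q=\Phi(\tilde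 s_q(\mathbf z))$. Let $\hat\phi$ be the piecewise-linear interpolant of $\phi$ on a uniform grid of $G_\phi\ge2$ knots over $I_\phi$, $\hat\Phi$ the piecewise-linear interpolant of $\Phi$ on a uniform grid of $G_\Phi\ge2$ knots over $I_\Phi$, and $\hat T$ the map defined as $T$ with $(\phi,\Phi)$ replaced by $(\hat\phi,\hat\Phi)$ (same $\lambda,\eta,\alpha,\tau,\omega,\mathcal N$). Put $h_\phi=|I_\phi|/(G_\phi-1)$, $h_\Phi=|I_\Phi|/(G_\Phi-1)$, $M_{\phi''}=\|\phi''\|_{L^\infty(I_\phi)}$, $M_{\Phi''}=\|\Phi''\|_{L^\infty(I_\Phi)}$, $L_\Phi=\|\Phi'\|_{L^\infty(I_\Phi)}$, $\delta_\phi=\frac{M_{\phi''}}8h_\phi^2$, $\delta_\Phi=\frac{M_{\Phi''}}8h_\Phi^2$. Then for all $\mathbf z\in\mathcal B_{\mathrm{in}}$, $$\|T(\mathbf z)-\hat T(\mathbf z)\|_\infty\le L_\Phi R_{\mathrm{mix}}\|\lambda\|_1\delta_\phi+\delta_\Phi\le K_T\max\{h_\phi^2,h_\Phi^2\},\quad K_T=\tfrac18\bigl(L_\Phi R_{\mathrm{mix}}\|\lambda\|_1M_{\phi''}+M_{\Phi''}\bigr).$$ Moreover, if $R:\mathbb{R}^{d_{\mathrm{in}}}\to\mathbb{R}^{d_{\mathrm{out}}}$ is any map and $T_{\mathrm{res}}=T+R$, $\hat T_{\mathrm{res}}=\hat T+R$, the same bounds hold for $\|T_{\mathrm{res}}(\mathbf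 z)-\hat T_{\mathrm{res}}(\mathbf z)\|_\infty$.
   Context: This describes a single Sprecher block with optional lateral mixing: the output channels are indexed $q=0,\dots,d_{\mathrm{out}}-1$, $\|\lambda\|_1=\sum_i|\lambda_i|$, and $|I|$ denotes the length of an interval $I$. *)

(* Defs.v *)
From HB Require Import structures.
From mathcomp Require Import all_boot all_order all_algebra.
From mathcomp Require Import all_classical all_reals all_analysis.
Set Implicit Arguments. Unset Strict Implicit. Unset Printing Implicit Defensive.
Import Order.TTheory GRing.Theory Num.Theory.
Import numFieldNormedType.Exports.
Local Open Scope classical_set_scope.
Local Open Scope ring_scope.

Section SprecherDefs.
Variable R : realType.

Definition C2_near (f : R -> R) (a b : R) : Prop :=
  exists e : R, 0 < e /\
    forall x : R, a - e < x -> x < b + e ->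
      [/\ derivable f x 1, derivable (derive1 f) x 1 & {for x, continuous (derive1n 2 f)}].

(* sup-norm of f over the compact interval [a,b] (= L^oo norm for continuous f) *)
Definition supnorm (f : R -> R) (a b : R) : R :=
  sup [set `|f x| | x in `[a, b]].

(* piecewise-linear interpolant of f on the uniform grid of G knots
   a = x_0 < ... < x_{G-1} = b, x_k = a + k h, h = (b-a)/(G-1).
   On [x_k, x_{k+1}] it is the chord of f between the two knots
   (outside [a,b] the first/last chord is extended linearly). *)
Definition pl_interp (f : R -> R) (a b : R) (G : nat) (x : R) : R :=
  let h := (b - a) / (G - 1)%:R in
  let k := minn (G - 2) (Num.truncn ((x - a) / h)) in
  let xk := a + k%:R * h in
  f xk + (x - xk) / h * (f (xk + h) - f xk).

Definition l1norm (n : nat) (v : 'I_n -> R) : R := \sum_(i < n) `|v i|.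

Definition infnorm (n : nat) (v : 'I_n -> R) : R := \big[Num.max/0]_(i < n) `|v i|.

Variables (din dout : nat).

Definition s_pre (phi : R -> R) (lam : 'I_din -> R) (eta alpha : R)
    (z : 'I_din -> R) (q : 'I_dout) : R :=
  \sum_(i < din) lam i * phi (z i + eta * (q : nat)%:R) + alpha * (q : nat)%:R.

Definition s_mix (phi : R -> R) (lam : 'I_din -> R) (eta alpha tau : R)
    (N : 'I_dout -> {set 'I_dout}) (omega : 'I_dout -> 'I_dout -> R)
    (z : 'I_din -> R) (q : 'I_dout) : R :=
  s_pre phi lam eta alpha z q
  + tau * \sum_(j in N q) omega q j * s_pre phi lam eta alpha z j.

Definition Tblock (phi Phi : R -> R) (lam : 'I_din -> R) (eta alpha tau : R)
    (N : 'I_dout -> {set 'I_dout}) (omega : 'I_dout -> 'I_dout -> R)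
    (z : 'I_din -> R) : 'I_dout -> R :=
  fun q => Phi (s_mix phi lam eta alpha tau N omega z q).

End SprecherDefs.

(* Main.v *)
Require Import Defs.
From HB Require Import structures.
From mathcomp Require Import all_boot all_order all_algebra.
From mathcomp Require Import all_classical all_reals all_analysis.
From mathcomp Require Import ring lra zify.
Import Order.TTheory GRing.Theory Num.Theory.
Import numFieldNormedType.Exports.
Local Open Scope classical_set_scope.
Local Open Scope ring_scope.

Lemma nat_aux1 n G : (1 < G)%N -> (n <= G - 2)%N -> (n.+1 <= G - 1)%N.
Proof. lia. Qed.
Lemma nat_aux2 G : (1 < G)%N -> (G - 2).+1 = (G - 1)%N.
Proof. lia. Qed.

Section Aux.
Variable R : realType.
Lemma supnorm_ub (f : R -> R) a b :
  a <= b -> (forall x, a <= x <= b -> {for x, continuous f}) ->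
  (forall x, a <= x <= b -> `|f x| <= supnorm f a b) /\ 0 <= supnorm f a b.
Proof.
move=> ab cf.
have cg : {within `[a, b], continuous (fun x => `|f x|)}.
  apply: continuous_in_subspaceT => x; rewrite inE /= in_itv /= => xab.
  apply: (@continuous_comp _ _ _ f Num.norm); first exact: cf.
  exact: norm_continuous.
have [c cab cmax] := EVT_max ab cg.
have hub : has_ubound [set `|f x| | x in `[a, b]].
  exists `|f c|; move=> _ [x xab <-]; apply: cmax; by rewrite inE.
have H : forall x, a <= x <= b -> `|f x| <= supnorm f a b.
  move=> x xab; apply: (ub_le_sup hub); exists x => //=.
split => //; apply: le_trans (H a _) => //; by rewrite lexx ab.
Qed.
Lemma rolle' (F dF : R -> R) (p q : R) : p < q ->
  (forall t : R, p <= t <= q -> is_derive t 1 F (dF t)) -> F p = F q ->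
  exists c, p < c < q /\ dF c = 0.
Proof.
move=> pq dF0 Fpq.
have cF : {within `[p, q], continuous F}.
  apply: derivable_within_continuous => t; rewrite in_itv /= => tpq.
  by have [] := dF0 t tpq.
have dF1 : forall t, t \in `]p, q[ -> is_derive t 1 F (dF t).
  move=> t; rewrite in_itv /= => /andP[pt tq]; apply: dF0.
  by rewrite !ltW.
have [c] := MVT pq dF1 cF.
rewrite in_itv /= => cpq; rewrite Fpq subrr => /esym /eqP.
rewrite mulf_eq0 subr_eq0 (gt_eqF pq) orbF => /eqP dc.
by exists c.
Qed.

Lemma is_derive_quad (a0 a1 a2 t : R) :
  is_derive t 1 (fun s => a0 + a1 * s + a2 * (s * s)) (a1 + a2 * (2 * t)).
Proof.
have H := is_deriveD (is_deriveD (is_derive_cst a0 t 1) (is_deriveZ a1 (is_derive_id t 1)))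
  (is_deriveZ a2 (is_deriveM (is_derive_id t 1) (is_derive_id t 1))).
have -> : (fun s => a0 + a1 * s + a2 * (s * s)) = cst a0 + a1 \*: id + a2 \*: (id * id).
  by apply/funext => s.
apply: (is_derive_eq H).
change (0 + a1 * 1 + a2 * (t * 1 + t * 1) = a1 + a2 * (2 * t)); ring.
Qed.

Lemma chord_err (f : R -> R) (u h x M : R) : 0 < h -> u <= x <= u + h ->
  (forall t, u <= t <= u + h ->
     [/\ derivable f t 1, derivable (derive1 f) t 1 & `|(derive1n 2 f) t| <= M]) ->
  `|f x - (f u + (x - u) / h * (f (u + h) - f u))| <= M / 8 * h ^+ 2.
Proof.
move=> h0 /andP[ux xv] Hf.
have M0 : 0 <= M.
  have uu : u <= u <= u + h by rewrite lexx /= lerDl ltW.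
  have [_ _ H] := Hf u uu; exact: le_trans H.
have rhs0 : 0 <= M / 8 * h ^+ 2 by rewrite mulr_ge0 ?divr_ge0 ?sqr_ge0.
case: (eqVneq x u) => [->|xnu].
  by rewrite subrr mul0r mul0r addr0 subrr normr0.
case: (eqVneq x (u + h)) => [->|xnv].
  have -> : (u + h - u) / h = 1 by rewrite [u + h]addrC addrK divff // gt_eqF.
  have -> : f (u + h) - (f u + 1 * (f (u + h) - f u)) = 0 by ring.
  by rewrite normr0.
pose v := u + h.
have ux' : u < x by rewrite lt_neqAle eq_sym xnu ux.
have xv' : x < v by rewrite lt_neqAle xnv xv.
pose S := (f v - f u) / h.
pose P := (x - u) * (x - v).
have P0 : P != 0 by rewrite /P mulf_neq0 // subr_eq0; [rewrite gt_eqF | rewrite lt_eqF].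
pose gx := f x - (f u + (x - u) / h * (f v - f u)).
pose K := gx / P.
pose w := fun t => f t - (f u + (t - u) * S) - K * ((t - u) * (t - v)).
pose dw := fun t => (derive1 f) t - S - K * (2 * t - u - v).
pose d2 := fun t => (derive1n 2 f) t - 2 * K.
have Hd1 : forall t, u <= t <= v -> is_derive t 1 w (dw t).
  move=> t tuv; have [df _ _] := Hf t tuv.
  have Hf1 : is_derive t 1 f ((derive1 f) t) by rewrite derive1E; exact: derivableP.
  have -> : w = f + (fun s => (- f u + u * S - K * u * v) + (- S + K * (u + v)) * s + (- K) * (s * s)).
    by apply/funext => s; rewrite /w fctE; ring.
  apply: (is_derive_eq (is_deriveD Hf1 (is_derive_quad _ _ _ t))); rewrite /dw; ring.
have Hd2 : forall t, u <= t <= v -> is_derive t 1 dw (d2 t).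
  move=> t tuv; have [_ df _] := Hf t tuv.
  have Hf2 : is_derive t 1 (derive1 f) ((derive1n 2 f) t).
    by rewrite derive1nS derive1n1 derive1E; exact: derivableP.
  have -> : dw = (derive1 f) + (fun s => (- S + K * (u + v)) + (- 2 * K) * s + 0 * (s * s)).
    by apply/funext => s; rewrite /dw fctE; ring.
  apply: (is_derive_eq (is_deriveD Hf2 (is_derive_quad _ _ _ t))); rewrite /d2; ring.
have wu : w u = 0 by rewrite /w; ring.
have wv : w v = 0 by rewrite /w /S /v; field; rewrite gt_eqF.
have wx : w x = 0.
  rewrite /w /K -/P.
  have -> : f x - (f u + (x - u) * S) = gx by rewrite /gx /S; field; rewrite gt_eqF.
  by rewrite divfK // subrr.
have [c1 [/andP[uc1 c1x] dc1]] : exists c, u < c < x /\ dw c = 0.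
  apply: (@rolle' w) => //; last by rewrite wu wx.
  move=> t /andP[ut tx]; apply: Hd1; rewrite ut /=; apply: (le_trans tx); exact: ltW.
have [c2 [/andP[xc2 c2v] dc2]] : exists c, x < c < v /\ dw c = 0.
  apply: (@rolle' w) => //; last by rewrite wv wx.
  move=> t /andP[xt tv]; apply: Hd1; rewrite tv andbT; apply: (le_trans ux); exact: xt.
have [c3 [/andP[c13 c32] dc3]] : exists c, c1 < c < c2 /\ d2 c = 0.
  apply: (@rolle' dw) => //; first exact: (lt_trans c1x).
    move=> t /andP[ct tc]; apply: Hd2; apply/andP; split.
      exact: (le_trans (ltW uc1)).
    exact: (le_trans tc (ltW c2v)).
  by rewrite dc1 dc2.
have c3in : u <= c3 <= v.
  apply/andP; split; first exact: (le_trans (ltW uc1) (ltW c13)).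
  exact: (le_trans (ltW c32) (ltW c2v)).
have [_ _ hM] := Hf c3 c3in.
have KE : (derive1n 2 f) c3 = 2 * K by apply/eqP; rewrite -subr_eq0; apply/eqP.
have gxE : gx = K * P by rewrite /K divfK.
rewrite -/v -/gx gxE normrM.
have hK : `|K| <= M / 2.
  have : `|2 * K| <= M by rewrite -KE.
  rewrite normrM ger0_norm //; lra.
have hP : `|P| <= h ^+ 2 / 4.
  rewrite /P ler0_norm; last by apply: mulr_ge0_le0; rewrite ?subr_ge0 ?subr_le0 ltW.
  rewrite /v -subr_ge0.
  have -> : h ^+ 2 / 4 - - ((x - u) * (x - (u + h))) = (2 * x - 2 * u - h) ^+ 2 / 4 by field.
  by rewrite divr_ge0 ?sqr_ge0.
apply: le_trans (ler_pM (normr_ge0 K) (normr_ge0 P) hK hP) _.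
have -> : M / 2 * (h ^+ 2 / 4) = M / 8 * h ^+ 2 by field.
by [].
Qed.

Lemma convex_bound (p q th M : R) : 0 <= th <= 1 -> `|p| <= M -> `|q| <= M ->
  `|p + th * (q - p)| <= M.
Proof.
move=> /andP[th0 th1] A B.
have -> : p + th * (q - p) = (1 - th) * p + th * q by ring.
have th1' : 0 <= 1 - th by rewrite subr_ge0.
apply: le_trans (ler_normD _ _) _.
rewrite !normrM (ger0_norm th1') (ger0_norm th0).
have := ler_wpM2l th0 B; have := ler_wpM2l th1' A.
lra.
Qed.

Lemma interp_err (f : R -> R) (a b : R) (G : nat) (x : R) :
  a <= b -> (2 <= G)%N -> C2_near f a b -> a <= x <= b ->
  `|f x - pl_interp f a b G x| <= supnorm (derive1n 2 f) a b / 8 * ((b - a) / (G - 1)%:R) ^+ 2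
  /\ `|pl_interp f a b G x| <= supnorm f a b.
Proof.
move=> ab G2 [e [e0 He]] /andP[ax xb].
have Hin : forall t, a <= t <= b -> [/\ derivable f t 1, derivable (derive1 f) t 1
     & {for t, continuous (derive1n 2 f)}].
  move=> t /andP[ta tb]; apply: He.
    by rewrite ltrBlDr (le_lt_trans ta) // ltrDl.
  by rewrite (le_lt_trans tb) // ltrDl.
have [Hf Mf0] := @supnorm_ub f a b ab (fun t tab => differentiable_continuous
   (proj1 (derivable1_diffP f t) (let: And3 d _ _ := Hin t tab in d))).
have [H2 M20] := @supnorm_ub (derive1n 2 f) a b ab (fun t tab => let: And3 _ _ c := Hin t tab in c).
set M2 := supnorm (derive1n 2 f) a b.
set Mf := supnorm f a b.
set h := (b - a) / (G - 1)%:R.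
set k := minn (G - 2) (Num.truncn ((x - a) / h)).
set u := a + k%:R * h.
have plE : pl_interp f a b G x = f u + (x - u) / h * (f (u + h) - f u) by [].
rewrite plE.
have G1 : (0 < (G - 1)%:R :> R) by rewrite ltr0n subn_gt0 (leq_trans _ G2).
have bE : b - a = (G - 1)%:R * h by rewrite /h mulrC divfK // gt_eqF.
case: (eqVneq a b) => [eab|nab].
  have h00 : h = 0 by rewrite /h eab subrr mul0r.
  have xa : x = a by apply/eqP; rewrite eq_le ax andbT eab xb.
  rewrite /u h00 xa !mulr0 addr0 subrr !mul0r !addr0 subrr normr0.
  split; first by rewrite expr2 !mulr0.
  by apply: Hf; rewrite lexx ab.
have ab' : a < b by rewrite lt_neqAle nab ab.
have h0 : 0 < h by rewrite /h divr_gt0 // subr_gt0.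
pose t := (x - a) / h.
have t0 : 0 <= t by apply: divr_ge0; [rewrite subr_ge0 | exact: ltW].
have tE : t * h = x - a by rewrite /t divfK // gt_eqF.
have tG : t <= (G - 1)%:R.
  by rewrite -(ler_pM2r h0) tE -bE lerD2r.
have [kt tk1 kG] : [/\ k%:R <= t, t <= k%:R + 1 & k%:R + 1 <= (G - 1)%:R :> R].
  have [n_le n_lt] := andP (truncn_itv t0).
  rewrite /k -/t; case: (leqP (Num.truncn t) (G - 2)) => hn.
    split => //; first by rewrite natr1 ltW.
    by rewrite natr1 ler_nat nat_aux1.
  have e2 : (G - 2)%:R + 1 = (G - 1)%:R :> R by rewrite natr1 nat_aux2.
  rewrite e2; split => //.
  apply: le_trans n_le; rewrite ler_nat; exact: ltnW.
have ux : u <= x.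
  have : k%:R * h <= t * h by rewrite ler_pM2r.
  by rewrite tE /u => H; lra.
have xuh : x <= u + h.
  have : t * h <= (k%:R + 1) * h by rewrite ler_pM2r.
  by rewrite tE mulrDl mul1r /u => H; lra.
have au : a <= u by rewrite /u lerDl mulr_ge0 // ltW.
have uhb : u + h <= b.
  have : (k%:R + 1) * h <= (G - 1)%:R * h by rewrite ler_pM2r.
  by rewrite -bE mulrDl mul1r /u => H; lra.
split.
  apply: chord_err; [exact: h0 | by rewrite ux xuh | move=> s /andP[us sh]].
  have sab : a <= s <= b by rewrite (le_trans au us) (le_trans sh uhb).
  have [d1 d2 _] := Hin s sab; split => //; exact: H2.
apply: convex_bound.
- by rewrite divr_ge0 ?subr_ge0 ?(ltW h0) //= ler_pdivrMr // mul1r lerBlDl.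
- by apply: Hf; rewrite au (le_trans ux xb).
- by apply: Hf; rewrite uhb (le_trans au) // lerDl ltW.
Qed.
End Aux.

Lemma nat_aux3 (n m : nat) : (n < m)%N -> (n <= m - 1)%N.
Proof. lia. Qed.

Section Aux2.
Variable R : realType.

Lemma C2_cont (f : R -> R) a b : C2_near f a b -> forall x, a <= x <= b ->
  [/\ derivable f x 1, derivable (derive1 f) x 1, {for x, continuous f}
    & {for x, continuous (derive1 f)}].
Proof.
move=> [e [e0 He]] x /andP[ax xb].
have [d1 d2 _] : [/\ derivable f x 1, derivable (derive1 f) x 1
     & {for x, continuous (derive1n 2 f)}].
  apply: He; first by rewrite ltrBlDr (le_lt_trans ax) // ltrDl.
  by rewrite (le_lt_trans xb) // ltrDl.
split; [exact: d1 | exact: d2 | |]; apply: differentiable_continuous.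
  exact/derivable1_diffP.
exact/derivable1_diffP.
Qed.

Lemma lip_lt (f : R -> R) a b x y : C2_near f a b -> a <= x -> x < y -> y <= b ->
  `|f y - f x| <= supnorm (derive1 f) a b * `|y - x|.
Proof.
move=> Cf ax xy yb.
have ab : a <= b by rewrite (le_trans ax) // (le_trans (ltW xy)).
have [Hd _] := @supnorm_ub R (derive1 f) a b ab
   (fun t tab => let: And4 _ _ _ c := @C2_cont f a b Cf t tab in c).
have inab : forall t, x <= t <= y -> a <= t <= b.
  by move=> t /andP[xt ty]; rewrite (le_trans ax xt) (le_trans ty yb).
have dF : forall t, t \in `]x, y[ -> is_derive t 1 f (derive1 f t).
  move=> t; rewrite in_itv /= => /andP[xt ty].
  have tin : x <= t <= y by rewrite !ltW.
  have [d1 _ _ _] := @C2_cont f a b Cf t (inab t tin).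
  by rewrite derive1E; exact: derivableP.
have cF : {within `[x, y], continuous f}.
  apply: continuous_in_subspaceT => t; rewrite inE /= in_itv /= => txy.
  by have [_ _ c _] := @C2_cont f a b Cf t (inab t txy).
have [c] := MVT xy dF cF.
rewrite in_itv /= => /andP[xc cy] ->.
rewrite normrM; apply: ler_wpM2r => //; apply: Hd.
by rewrite (le_trans ax (ltW xc)) (le_trans (ltW cy) yb).
Qed.

Lemma lip_bound (f : R -> R) a b x y : C2_near f a b -> a <= x <= b -> a <= y <= b ->
  `|f x - f y| <= supnorm (derive1 f) a b * `|x - y|.
Proof.
move=> Cf /andP[ax xb] /andP[ay yb].
case: (ltgtP x y) => [xy|yx|->].
- by rewrite distrC (distrC x); exact: lip_lt.
- exact: lip_lt.
- have ab : a <= b by rewrite (le_trans ax).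
  have [_ L0] := @supnorm_ub R (derive1 f) a b ab
   (fun t tab => let: And4 _ _ _ c := @C2_cont f a b Cf t tab in c).
  by rewrite !subrr normr0 mulr0.
Qed.

Lemma mix_bound (dout : nat) (N : 'I_dout -> {set 'I_dout})
  (omega : 'I_dout -> 'I_dout -> R) (tau C : R) (g : 'I_dout -> R) (q : 'I_dout) :
  (forall j, `|g j| <= C) ->
  `|g q + tau * \sum_(j in N q) omega q j * g j|
    <= (1 + `|tau| * \big[Num.max/0]_(q < dout) \sum_(j in N q) `|omega q j|) * C.
Proof.
move=> Hg.
have C0 : 0 <= C := le_trans (normr_ge0 _) (Hg q).
have SB : \sum_(j in N q) `|omega q j| <= \big[Num.max/0]_(q < dout) \sum_(j in N q) `|omega q j|.
  exact: (le_bigmax 0 (fun q => \sum_(j in N q) `|omega q j|) q).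
have S : `|\sum_(j in N q) omega q j * g j| <= (\sum_(j in N q) `|omega q j|) * C.
  apply: le_trans (ler_norm_sum _ _ _) _; rewrite big_distrl /=; apply: ler_sum => j _.
  by rewrite normrM; apply: ler_wpM2l.
apply: le_trans (ler_normD _ _) _; rewrite normrM mulrDl mul1r; apply: lerD (Hg q) _.
rewrite -mulrA; apply: ler_wpM2l => //; apply: le_trans S _; exact: ler_wpM2r.
Qed.

Lemma spre_diff din dout (phi1 phi2 : R -> R) (lam : 'I_din -> R) eta alpha
   (z : 'I_din -> R) (q : 'I_dout) (P : R -> Prop) d :
  (forall y, P y -> `|phi1 y - phi2 y| <= d) -> (forall i, P (z i + eta * (q : nat)%:R)) ->
  `|s_pre phi1 lam eta alpha z q - s_pre phi2 lam eta alpha z q| <= l1norm lam * d.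
Proof.
move=> Hd HP; rewrite /s_pre opprD addrACA subrr addr0 -sumrB.
apply: le_trans (ler_norm_sum _ _ _) _; rewrite /l1norm big_distrl /=; apply: ler_sum => i _.
by rewrite -mulrBr normrM; apply: ler_wpM2l => //; apply: Hd.
Qed.

Lemma spre_bound din dout (phi : R -> R) (lam : 'I_din -> R) eta alpha
   (z : 'I_din -> R) (q : 'I_dout) (P : R -> Prop) M :
  (forall y, P y -> `|phi y| <= M) -> (forall i, P (z i + eta * (q : nat)%:R)) ->
  `|s_pre phi lam eta alpha z q| <= l1norm lam * M + `|alpha| * (dout - 1)%:R.
Proof.
move=> Hd HP; rewrite /s_pre; apply: le_trans (ler_normD _ _) _; apply: lerD.
  apply: le_trans (ler_norm_sum _ _ _) _; rewrite /l1norm big_distrl /=; apply: ler_sum => i _.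
  by rewrite normrM; apply: ler_wpM2l => //; apply: Hd.
rewrite normrM; apply: ler_wpM2l => //; rewrite normr_nat ler_nat.
exact: nat_aux3.
Qed.
Lemma sec_alg (L Rm l M2 M2' hp hP : R) : 0 <= L -> 0 <= Rm -> 0 <= l -> 0 <= M2 -> 0 <= M2' ->
  L * Rm * l * (M2 / 8 * hp ^+ 2) + M2' / 8 * hP ^+ 2
    <= (L * Rm * l * M2 + M2') / 8 * Num.max (hp ^+ 2) (hP ^+ 2).
Proof.
move=> L0 R0 l0 M0 M0'.
set m := Num.max (hp ^+ 2) (hP ^+ 2).
set A := L * Rm * l * M2.
have A0 : 0 <= A by apply: mulr_ge0 M0; apply: mulr_ge0 l0; exact: mulr_ge0.
have -> : L * Rm * l * (M2 / 8 * hp ^+ 2) + M2' / 8 * hP ^+ 2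
   = A / 8 * hp ^+ 2 + M2' / 8 * hP ^+ 2 by rewrite /A; ring.
rewrite !mulrDl.
apply: lerD; apply: ler_wpM2l.
- by apply: divr_ge0; [exact: A0 | exact: ler0n].
- by rewrite /m le_max lexx.
- by apply: divr_ge0; [exact: M0' | exact: ler0n].
- by rewrite /m le_max lexx orbT.
Qed.
End Aux2.

Theorem mainTheorem2 (R : realType) (din dout : nat)
  (hdin : (1 <= din)%N) (hdout : (1 <= dout)%N)
  (lam : 'I_din -> R) (eta alpha tau : R)
  (N : 'I_dout -> {set 'I_dout}) (omega : 'I_dout -> 'I_dout -> R)
  (Bin : R) (hBin : 0 < Bin)
  (phi Phi : R -> R) (Gphi GPhi : nat)
  (hGphi : (2 <= Gphi)%N) (hGPhi : (2 <= GPhi)%N)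
  (Rres : ('I_din -> R) -> ('I_dout -> R)) :
  let aphi := - Bin - `|eta| * (dout - 1)%:R in
  let bphi := Bin + `|eta| * (dout - 1)%:R in
  let Mphi := supnorm phi aphi bphi in
  let Bomega := \big[Num.max/0]_(q < dout) \sum_(j in N q) `|omega q j| in
  let Rmix := 1 + `|tau| * Bomega in
  let Ms := l1norm lam * Mphi + `|alpha| * (dout - 1)%:R in
  let aPhi := - (Rmix * Ms) in
  let bPhi := Rmix * Ms in
  C2_near phi aphi bphi ->
  C2_near Phi aPhi bPhi ->
  let phih := pl_interp phi aphi bphi Gphi in
  let Phih := pl_interp Phi aPhi bPhi GPhi in
  let T := Tblock phi Phi lam eta alpha tau N omega in
  let Th := Tblock phih Phih lam eta alpha tau N omega in
  let hphi := (bphi - aphi) / (Gphi - 1)%:R in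
  let hPhi := (bPhi - aPhi) / (GPhi - 1)%:R in
  let Mphi2 := supnorm (derive1n 2 phi) aphi bphi in
  let MPhi2 := supnorm (derive1n 2 Phi) aPhi bPhi in
  let LPhi := supnorm (derive1 Phi) aPhi bPhi in
  let dphi := Mphi2 / 8 * hphi ^+ 2 in
  let dPhi := MPhi2 / 8 * hPhi ^+ 2 in
  let KT := (LPhi * Rmix * l1norm lam * Mphi2 + MPhi2) / 8 in
  forall z : 'I_din -> R, (forall i, `|z i| <= Bin) ->
    [/\ infnorm (fun q => T z q - Th z q) <= LPhi * Rmix * l1norm lam * dphi + dPhi,
        LPhi * Rmix * l1norm lam * dphi + dPhi <= KT * Num.max (hphi ^+ 2) (hPhi ^+ 2),
        infnorm (fun q => (T z q + Rres z q) - (Th z q + Rres z q))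
          <= LPhi * Rmix * l1norm lam * dphi + dPhi
      & LPhi * Rmix * l1norm lam * dphi + dPhi <= KT * Num.max (hphi ^+ 2) (hPhi ^+ 2)].
Proof.
move=> aphi bphi Mphi Bomega Rmix Ms aPhi bPhi Cphi CPhi phih Phih T Th hphi hPhi
  Mphi2 MPhi2 LPhi dphi dPhi KT z hz.
have dpos : 0 <= (dout - 1)%:R :> R by [].
have E0 : 0 <= `|eta| * (dout - 1)%:R by rewrite mulr_ge0.
have abphi : aphi <= bphi by rewrite /aphi /bphi; lra.
have Pz : forall (q : 'I_dout) i, aphi <= z i + eta * (q : nat)%:R <= bphi.
  move=> q i.
  have hq : `|eta * (q : nat)%:R| <= `|eta| * (dout - 1)%:R.
    rewrite normrM; apply: ler_wpM2l => //; rewrite normr_nat ler_nat.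
    exact: nat_aux3.
  move: (hz i) hq; rewrite !ler_norml /aphi /bphi => /andP[h1 h2] /andP[h3 h4].
  apply/andP; split; lra.
have [HMphi Mphi0] := @supnorm_ub R phi aphi bphi abphi
   (fun t tab => let: And4 _ _ c _ := @C2_cont R phi aphi bphi Cphi t tab in c).
have Ierr : forall y, aphi <= y <= bphi ->
   `|phi y - phih y| <= dphi /\ `|phih y| <= Mphi.
  move=> y yin; exact: interp_err.
have Bom0 : 0 <= Bomega.
  rewrite /Bomega; apply: (big_ind (fun x => 0 <= x)) => [//|x y hx hy|q _].
    by rewrite le_max hx.
  by apply: sumr_ge0 => j _; exact: normr_ge0.
have Rmix1 : 1 <= Rmix by rewrite /Rmix lerDl mulr_ge0.
have l10 : 0 <= l1norm lam by apply: sumr_ge0 => i _; exact: normr_ge0.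
have Ms0 : 0 <= Ms by rewrite /Ms addr_ge0 ?mulr_ge0.
have abPhi : aPhi <= bPhi.
  rewrite /aPhi /bPhi; have : 0 <= Rmix * Ms by rewrite mulr_ge0 // (le_trans ler01 Rmix1).
  lra.
have [HLPhi LPhi0] := @supnorm_ub R (derive1 Phi) aPhi bPhi abPhi
   (fun t tab => let: And4 _ _ _ c := @C2_cont R Phi aPhi bPhi CPhi t tab in c).
have Mphi20 : 0 <= supnorm (derive1n 2 phi) aphi bphi.
  case: (Cphi) => e [e0 He].
  have cont : forall t, aphi <= t <= bphi -> {for t, continuous (derive1n 2 phi)}.
    move=> t /andP[ta tb].
    have h1 : aphi - e < t by rewrite ltrBlDr (le_lt_trans ta) // ltrDl.
    have h2 : t < bphi + e by rewrite (le_lt_trans tb) // ltrDl.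
    by have [_ _ c] := He t h1 h2.
  exact: (@supnorm_ub R _ _ _ abphi cont).2.
have MPhi20 : 0 <= supnorm (derive1n 2 Phi) aPhi bPhi.
  case: (CPhi) => e [e0 He].
  have cont : forall t, aPhi <= t <= bPhi -> {for t, continuous (derive1n 2 Phi)}.
    move=> t /andP[ta tb].
    have h1 : aPhi - e < t by rewrite ltrBlDr (le_lt_trans ta) // ltrDl.
    have h2 : t < bPhi + e by rewrite (le_lt_trans tb) // ltrDl.
    by have [_ _ c] := He t h1 h2.
  exact: (@supnorm_ub R _ _ _ abPhi cont).2.
have dphi0 : 0 <= dphi.
  apply: mulr_ge0; last exact: sqr_ge0.
  apply: divr_ge0; [exact: Mphi20 | exact: ler0n].
have dPhi0 : 0 <= dPhi.
  apply: mulr_ge0; last exact: sqr_ge0.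
  apply: divr_ge0; [exact: MPhi20 | exact: ler0n].
have Rmix0 : 0 <= Rmix := le_trans ler01 Rmix1.
have LPhi0' : 0 <= LPhi := LPhi0.
have bound0 : 0 <= LPhi * Rmix * l1norm lam * dphi + dPhi.
  apply: addr_ge0 dPhi0; apply: mulr_ge0 dphi0; apply: mulr_ge0 l10.
  exact: mulr_ge0 LPhi0' Rmix0.
have main : forall q, `|T z q - Th z q| <= LPhi * Rmix * l1norm lam * dphi + dPhi.
  move=> q.
  pose g1 := fun j : 'I_dout => s_pre phi lam eta alpha z j.
  pose g2 := fun j : 'I_dout => s_pre phih lam eta alpha z j.
  have g1b : forall j, `|g1 j| <= Ms.
    move=> j; rewrite /g1 /g2 /Ms; apply: (@spre_bound R din dout phi lam eta alpha z j (fun y => aphi <= y <= bphi)).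
      exact: HMphi.
    exact: Pz.
  have g2b : forall j, `|g2 j| <= Ms.
    move=> j; rewrite /g1 /g2 /Ms; apply: (@spre_bound R din dout phih lam eta alpha z j (fun y => aphi <= y <= bphi)).
      by move=> y /Ierr [].
    exact: Pz.
  have gdb : forall j, `|g1 j - g2 j| <= l1norm lam * dphi.
    move=> j; rewrite /g1 /g2; apply: (@spre_diff R din dout phi phih lam eta alpha z j (fun y => aphi <= y <= bphi)).
      by move=> y /Ierr [].
    exact: Pz.
  have s1b := @mix_bound R dout N omega tau _ _ q g1b.
  have s2b := @mix_bound R dout N omega tau _ _ q g2b.
  have sdb := @mix_bound R dout N omega tau _ _ q gdb.
  rewrite -/Bomega -/Rmix in s1b s2b sdb.
  have sE : s_mix phi lam eta alpha tau N omega z q - s_mix phih lam eta alpha tau N omega z q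
     = (g1 q - g2 q) + tau * \sum_(j in N q) omega q j * (g1 j - g2 j).
    rewrite /s_mix -/(g1 q) -/(g2 q).
    have -> : \sum_(j in N q) omega q j * (g1 j - g2 j)
       = \sum_(j in N q) omega q j * g1 j - \sum_(j in N q) omega q j * g2 j.
      by rewrite -sumrB; apply: eq_bigr => j _; rewrite mulrBr.
    rewrite /g1 /g2; ring.
  set s1 := s_mix phi lam eta alpha tau N omega z q in sE.
  set s2 := s_mix phih lam eta alpha tau N omega z q in sE.
  have s1in : aPhi <= s1 <= bPhi by rewrite /aPhi /bPhi -ler_norml.
  have s2in : aPhi <= s2 <= bPhi by rewrite /aPhi /bPhi -ler_norml.
  rewrite /T /Th /Tblock -/s1 -/s2.
  have -> : Phi s1 - Phih s2 = (Phi s1 - Phi s2) + (Phi s2 - Phih s2) by ring.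
  apply: le_trans (ler_normD _ _) _; apply: lerD; last first.
    by have [] := @interp_err R Phi aPhi bPhi GPhi s2 abPhi hGPhi CPhi s2in.
  apply: le_trans (@lip_bound R Phi aPhi bPhi s1 s2 CPhi s1in s2in) _.
  have key : `|s1 - s2| <= Rmix * (l1norm lam * dphi) by rewrite sE; exact: sdb.
  apply: le_trans (ler_wpM2l LPhi0 key) _.
  by rewrite !mulrA.
have inf : infnorm (fun q => T z q - Th z q) <= LPhi * Rmix * l1norm lam * dphi + dPhi.
  by rewrite /infnorm; apply: bigmax_le => // q _; exact: main.
have sec : LPhi * Rmix * l1norm lam * dphi + dPhi <= KT * Num.max (hphi ^+ 2) (hPhi ^+ 2).
  exact: (@sec_alg R _ _ _ _ _ _ _ LPhi0' Rmix0 l10 Mphi20 MPhi20).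
split => //.
have -> : (fun q => T z q + Rres z q - (Th z q + Rres z q)) = (fun q => T z q - Th z q).
  by apply/funext => q; ring.
exact: inf.
Qed.
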